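(* Let $X$ be a complex Banach space and $T:X\to X$ a bounded linear operator. Then: (i) for every $\lambda\in\mathbb C$ with $|\lambda|=1$ we have $\mathrm{Rec}(T)=\mathrm{Rec}(\lambda T)$; (ii) for every positive integer $p$ we have $\mathrm{Rec}(T)=\mathrm{Rec}(T^p)$. In particular, $T$ is recurrent if and only if $T^p$ is recurrent for every positive integer $p$, if and only if $\lambda T$ is recurrent for every $\lambda\in\mathbb T=\{z\in\mathbb C:|z|=1\}$.
   Context: A vector $x\in X$ is recurrent for $T$ if there is a strictly increasing sequence of positive integers $(k_n)$ with $T^{k_n}x\to x$; $\mathrm{Rec}(T)$ denotes the set of recurrent vectors of $T$. The operator $T$ is called recurrent if for every non-empty open set $U\subset X$ there is $k\in\mathbb N$ with $U\cap T^{-k}(U)\neq\emptyset$. *)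

(* Defs.v *)
From mathcomp Require Import all_boot all_algebra.
From mathcomp Require Import complex.
From mathcomp Require Import all_classical all_reals all_analysis.
Import GRing.Theory Num.Theory.
Import numFieldNormedType.Exports.
Local Open Scope ring_scope.
Local Open Scope classical_set_scope.

(* Complex Banach space: X : completeNormedModType R[i] with R : realType,
   so that the scalar field is the complex numbers R[i]. *)

Definition Rec {K : numDomainType} {X : normedModType K} (T : X -> X) : set X :=
  [set x | exists k : nat -> nat,
     (forall n, (0 < k n)%N) /\ {homo k : a b / (a < b)%N} /\
     (fun n => iter (k n) T x) @ \oo --> x].

Definition recurrent_op {K : numDomainType} {X : normedModType K} (T : X -> X) : Prop :=
  forall U : set X, open U -> U !=set0 ->
    exists k : nat, (0 < k)%N /\ U `&` (iter k T @^-1` U) !=set0.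

Definition scale_op {K : numDomainType} {X : normedModType K} (l : K) (T : X -> X) : X -> X :=
  fun x => l *: T x.

(* Main.v *)
Require Import Defs.
From mathcomp Require Import all_boot all_algebra.
From mathcomp Require Import order.
Import Order.TTheory.
From mathcomp Require Import complex.
From mathcomp Require Import zify.
From mathcomp Require Import all_classical all_reals all_analysis.
From mathcomp Require Import ring lra.
Import GRing.Theory Num.Theory.
Import numFieldNormedType.Exports.
Local Open Scope ring_scope.
Local Open Scope classical_set_scope.
Lemma pigeon (n : nat) (f : nat -> nat) :
  (forall i, (i <= n)%N -> (f i < n)%N) ->
  exists a b, (a < b <= n)%N /\ f a = f b.
Proof.
move=> hf.
pose g (i : 'I_n.+1) : 'I_n := Ordinal (hf i (ltn_ord i)).
have : ~~ injectiveb g.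
  apply/negP => /injectiveP /leq_card; rewrite !card_ord ltnn //.
case/injectivePn => i [j] ij /(congr1 val) /= gij.
case: (ltngtP i j) => [lij|lji|eij].
- by exists i, j; rewrite lij -ltnS ltn_ord.
- by exists j, i; rewrite lji -ltnS ltn_ord.
- by move: ij; rewrite (val_inj eij) eqxx.
Qed.

Lemma homo_ge (k : nat -> nat) : {homo k : a b / (a < b)%N} -> forall n, (n <= k n)%N.
Proof.
move=> hk; elim=> // n IH; apply: leq_ltn_trans IH _; exact: hk.
Qed.

Lemma sum_ge (g : nat -> nat) N a d : (forall i, (N < g i)%N) -> (0 < d)%N ->
  (N < \sum_(a <= i < a + d) g i)%N.
Proof.
move=> hg; case: d => // d _; rewrite addnS big_nat_recr ?leq_addr //=.
by apply: leq_trans (hg (a + d)) _; apply: leq_addl.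
Qed.
Lemma chain {Y : topologicalType} (T : Y -> Y) (Q : set Y -> Prop) (N : nat)
  (hT : forall n W, open W -> open (iter n T @^-1` W))
  (HN : forall V, open V -> Q V -> exists k, (N < k)%N /\ Q (V `&` iter k T @^-1` V))
  (V : set Y) (oV : open V) (QV : Q V) :
  exists (g : nat -> nat) (U : nat -> set Y),
    (forall j, open (U j) /\ Q (U j)) /\ (forall j, (N < g j)%N) /\ U 0%N = V /\
    (forall a d y, U (a + d)%N y ->
       U a y /\ U a (iter (\sum_(a <= i < a + d) g i)%N T y)).
Proof.
have : forall W : set Y, exists k : nat, (open W /\ Q W) ->
    (N < k)%N /\ Q (W `&` iter k T @^-1` W).
  move=> W; case: (pselect (open W /\ Q W)) => [[oW QW]|nW].
    by have [k hk] := HN W oW QW; exists k.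
  by exists 0%N.
case/choice=> F hF.
pose U := fix U j := match j with 0%N => V | j'.+1 => U j' `&` iter (F (U j')) T @^-1` U j' end.
have hU : forall j, open (U j) /\ Q (U j).
  elim=> [|j [oj Qj]] //=; have [_ Q'] := hF _ (conj oj Qj).
  by split=> //; apply: openI => //; exact: hT.
exists (fun j => F (U j)), U; split => //; split.
  by move=> j; have [] := hF _ (hU j).
split=> // a; elim=> [|d IH] y.
  by rewrite addn0 big_geq //.
rewrite addnS /= => -[Uy Uy'].
have [Uay _] := IH y Uy.
have [_ Ua'] := IH _ Uy'.
split=> //; rewrite big_nat_recr ?leq_addr //= iterD; exact: Ua'.
Qed.
Lemma chain_pairs {Y : topologicalType} (T : Y -> Y) (Q : set Y -> Prop) (N : nat)
  (Qmono : forall W W', Q W -> W `<=` W' -> Q W')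
  (hT : forall n W, open W -> open (iter n T @^-1` W))
  (HN : forall V, open V -> Q V -> exists k, (N < k)%N /\ Q (V `&` iter k T @^-1` V))
  (V : set Y) (oV : open V) (QV : Q V) :
  exists g : nat -> nat, (forall j, (N < g j)%N) /\
    forall a b, (a < b)%N -> Q (V `&` iter (\sum_(a <= i < b) g i)%N T @^-1` V).
Proof.
have [g [U [hU [hg [U0 hUs]]]]] := @chain _ T Q N hT HN V oV QV.
exists g; split=> // a b ab.
have [_ QUb] := hU b.
apply: Qmono QUb _ => y Uy.
rewrite -U0; split.
  by have [] := hUs 0%N b y Uy.
have e : b = (a + (b - a))%N by rewrite subnKC // ltnW.
rewrite e in Uy; have [_ Ua] := hUs a (b - a)%N y Uy.
rewrite -e in Ua.
by have [] := hUs 0%N a _ Ua.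
Qed.

Lemma chain_modp {Y : topologicalType} (T : Y -> Y) (Q : set Y -> Prop) (N p : nat)
  (p0 : (0 < p)%N)
  (Qmono : forall W W', Q W -> W `<=` W' -> Q W')
  (hT : forall n W, open W -> open (iter n T @^-1` W))
  (HN : forall V, open V -> Q V -> exists k, (N < k)%N /\ Q (V `&` iter k T @^-1` V))
  (V : set Y) (oV : open V) (QV : Q V) :
  exists m, (N < m)%N /\ (p %| m)%N /\ Q (V `&` iter m T @^-1` V).
Proof.
have [g [hg hQ]] := @chain_pairs _ T Q N Qmono hT HN V oV QV.
pose s i := (\sum_(0 <= j < i) g j)%N.
have [a [b [/andP[ab bp] eab]]] := @pigeon p (fun i => s i %% p)%N (fun i _ => ltn_pmod _ p0).
exists (\sum_(a <= i < b) g i)%N; split; last split; last exact: hQ.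
  have e : b = (a + (b - a))%N by rewrite subnKC // ltnW.
  rewrite e; apply: sum_ge; first exact: hg.
  rewrite subn_gt0; exact: ab.
have hs : s b = (s a + \sum_(a <= i < b) g i)%N.
  by rewrite /s (big_cat_nat (leq0n a) (ltnW ab)).
move: eab; rewrite hs -{1}(addn0 (s a)) => /eqP.
rewrite eqn_modDl mod0n /dvdn eq_sym; exact.
Qed.
Section T. Variable R : realType.
Lemma cdiff (a b c d : R) : (Complex a b) - (Complex c d) = Complex (a - c) (b - d).
Proof. reflexivity. Qed.

Lemma pos_real (d : R[i]) : 0 < d -> exists e : R, 0 < e /\ d = e%:C%C.
Proof.
case: d => d1 d2; rewrite ltcE /= => /andP[/eqP -> h].
by exists d1.
Qed.

Lemma unit_bound (z : R[i]) : `|z| = 1 ->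
  (-1 <= complex.Re z <= 1) /\ (-1 <= complex.Im z <= 1).
Proof.
rewrite normc_def => /(congr1 (@complex.Re R)) /= h.
have h0 : 0 <= complex.Re z ^+ 2 + complex.Im z ^+ 2 by rewrite addr_ge0 // sqr_ge0.
have h1 : complex.Re z ^+ 2 + complex.Im z ^+ 2 = 1 by rewrite -(sqr_sqrtr h0) h expr1n.
move: h1; set a := complex.Re z; set b := complex.Im z => h1.
rewrite !expr2 in h1.
split; apply/andP; split; nra.
Qed.

Lemma norm_ReIm (w : R[i]) :
  `|w| <= (`|complex.Re w| + `|complex.Im w|)%:C%C.
Proof.
rewrite normc_def lecR.
set a := complex.Re w; set b := complex.Im w.
have hab : 0 <= `|a| + `|b| by apply: addr_ge0.
have -> : `|a| + `|b| = Num.sqrt ((`|a| + `|b|) ^+ 2).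
  by rewrite sqrtr_sqr (ger0_norm hab).
have h2 : a ^+ 2 + b ^+ 2 <= (`|a| + `|b|) ^+ 2.
  have := normr_ge0 a; have := normr_ge0 b.
  rewrite sqrrD !real_normK ?num_real //; nra.
by rewrite (ler_sqrt (a ^+ 2 + b ^+ 2) (sqr_ge0 (`|a| + `|b|))).
Qed.

Lemma trunc_close (u v : R) : 0 <= u -> 0 <= v -> Num.truncn u = Num.truncn v ->
  `|u - v| < 1.
Proof.
move=> u0 v0 e; have /andP[h1 h2] := truncn_itv u0; have /andP[h3 h4] := truncn_itv v0.
rewrite e in h1 h2; move: h1 h2 h3 h4; set n := Num.truncn v.
rewrite -natr1; move=> h1 h2 h3 h4.
rewrite ltr_norml; apply/andP; split; lra.
Qed.

Lemma circ_pigeon (z : nat -> R[i]) (hz : forall i, `|z i| = 1) (e : R) (e0 : 0 < e) :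
  exists a b, (a < b)%N /\ `|z b - z a| < e%:C%C.
Proof.
pose c := (Num.truncn (2 / e)).+1.
have c0 : 0 < (c%:R : R) by rewrite ltr0n.
have ec : 2 < e * c%:R.
  have h0 : 0 <= 2 / e by rewrite divr_ge0 // ltW.
  have /andP[_ h] := truncn_itv h0.
  have he : 2 / e * e = 2 by rewrite divfK // gt_eqF.
  rewrite -/c in h; nra.
pose K := (2 * c).+1.
pose idx (t : R) := Num.truncn ((t + 1) * c%:R).
have hidx : forall t, -1 <= t <= 1 -> (idx t < K)%N.
  move=> t /andP[t1 t2]; rewrite /idx truncn_lt_nat; last by apply: mulr_ge0; lra.
  have := c0; rewrite /K -natr1 natrM; nra.
pose code i := (idx (complex.Re (z i)) * K + idx (complex.Im (z i)))%N.
have hcode : forall i, (i <= K * K)%N -> (code i < K * K)%N.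
  move=> i _; have [hr hi] := unit_bound _ (hz i).
  have := hidx _ hr; have := hidx _ hi; rewrite /code; nia.
have [a [b [/andP[ab _] eab]]] := @pigeon (K * K)%N code hcode.
exists a, b; split => //.
have [hra hia] := unit_bound _ (hz a); have [hrb hib] := unit_bound _ (hz b).
have [er ei] : (idx (complex.Re (z a)) = idx (complex.Re (z b))) /\ (idx (complex.Im (z a)) = idx (complex.Im (z b))).
  have := hidx _ hra; have := hidx _ hia; have := hidx _ hrb; have := hidx _ hib.
  move=> h1 h2 h3 h4; move: eab; rewrite /code => eab; split.
    have := congr1 (fun n => n %/ K)%N eab; rewrite /= !divnMDl // !divn_small //.
    by rewrite !addn0.
  have := congr1 (fun n => n %% K)%N eab; rewrite /= !modnMDl !modn_small //.
apply: le_lt_trans (norm_ReIm _) _; rewrite ltcR.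
move: hra hia hrb hib er ei; rewrite /idx.
case: (z a) => ra ia; case: (z b) => rb ib /= hra hia hrb hib er ei.
have ge : forall t : R, -1 <= t <= 1 -> 0 <= (t + 1) * c%:R.
  by move=> t /andP[t1 t2]; apply: mulr_ge0; lra.
have := trunc_close _ _ (ge _ hra) (ge _ hrb) er.
have := trunc_close _ _ (ge _ hia) (ge _ hib) ei.
rewrite !ltr_norml => /andP[i1 i2] /andP[r1 r2].
case: (lerP 0 (rb - ra)) => h1; [rewrite (ger0_norm h1) | rewrite (ltr0_norm h1)];
case: (lerP 0 (ib - ia)) => h2; [rewrite (ger0_norm h2) | rewrite (ltr0_norm h2)|
  rewrite (ger0_norm h2) | rewrite (ltr0_norm h2)]; nra.
Qed.

Lemma chain_circ {Y : topologicalType} (T : Y -> Y) (Q : set Y -> Prop) (N : nat)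
  (l : R[i]) (hl : `|l| = 1) (e : R) (e0 : 0 < e)
  (Qmono : forall W W', Q W -> W `<=` W' -> Q W')
  (hT : forall n W, open W -> open (iter n T @^-1` W))
  (HN : forall V, open V -> Q V -> exists k, (N < k)%N /\ Q (V `&` iter k T @^-1` V))
  (V : set Y) (oV : open V) (QV : Q V) :
  exists m, (N < m)%N /\ `|l ^+ m - 1| < e%:C%C /\ Q (V `&` iter m T @^-1` V).
Proof.
have [g [hg hQ]] := @chain_pairs _ T Q N Qmono hT HN V oV QV.
pose s i := (\sum_(0 <= j < i) g j)%N.
have hz : forall i, `|l ^+ s i| = 1 by move=> i; rewrite normrX hl expr1n.
have [a [b [ab eab]]] := @circ_pigeon (fun i => l ^+ s i) hz e e0.
exists (\sum_(a <= i < b) g i)%N; split; last split; last exact: hQ.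
  have e1 : b = (a + (b - a))%N by rewrite subnKC // ltnW.
  rewrite e1; apply: sum_ge; first exact: hg.
  rewrite subn_gt0; exact: ab.
have hs : s b = (s a + \sum_(a <= i < b) g i)%N.
  by rewrite /s (big_cat_nat (leq0n a) (ltnW ab)).
move: eab; rewrite hs exprD -{2}(mulr1 (l ^+ s a)) -mulrBr normrM normrX hl expr1n mul1r.
exact.
Qed.
End T.
Section A.
Variables (R : realType) (X : normedModType R[i]).

Lemma open_iter (T : X -> X) (hT : continuous T) n (W : set X) :
  open W -> open (iter n T @^-1` W).
Proof.
elim: n W => [|n IH] W oW; first exact: oW.
have -> : iter n.+1 T @^-1` W = T @^-1` (iter n T @^-1` W).
  by apply/funext => y; rewrite /preimage /= -iterS iterSr.
apply: open_comp; last exact: IH.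
by move=> y _; exact: hT.
Qed.

Lemma ballE (x y : X) (e : R[i]) : ball x e y = (`|x - y| < e).
Proof. by rewrite -ball_normE. Qed.

Lemma open_ball (V : set X) x : open V -> V x ->
  exists2 e : R[i], 0 < e & forall y, `|x - y| < e -> V y.
Proof.
move=> oV Vx; have : nbhs x V by apply: open_nbhs_nbhs; split.
case/nbhs_ballP => e e0 he; exists e => // y hy; apply: he; by rewrite ballE.
Qed.

Lemma RecP (T : X -> X) x : Rec T x <->
  (forall e : R[i], 0 < e -> forall N, exists m, (N < m)%N /\ `|x - iter m T x| < e).
Proof.
split.
- case=> k [k0 [kinc kcv]] e e0 N.
  have := (cvgrPdist_lt _ _).1 kcv e e0.
  case=> M _ hM.
  exists (k (maxn M N.+1)); split.
    have := @homo_ge k kinc (maxn M N.+1); have := leq_maxr M N.+1; lia.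
  by apply: hM; rewrite /= leq_maxl.
- move=> H.
  have H' : forall nN : nat * nat, exists m,
      (nN.2 < m)%N /\ `|x - iter m T x| < ((nN.1.+1%:R)^-1)%:C%C.
    by move=> [n N]; apply: H; rewrite ltcR invr_gt0 ltr0n.
  case/choice: H' => F hF.
  pose k := fix k n := match n with 0%N => F (0, 0)%N | n'.+1 => F (n, k n') end.
  have kS : forall n, (k n < k n.+1)%N by move=> n; have [] := hF (n.+1, k n).
  have kinc : {homo k : a b / (a < b)%N} by apply: homo_ltn kS; exact: ltn_trans.
  have hk : forall n, `|x - iter (k n) T x| < ((n.+1%:R)^-1)%:C%C.
    by case=> [|n]; [have [] := hF (0, 0)%N | have [] := hF (n.+1, k n)].
  exists k; split; [|split => //].
    by case=> [|n]; [have [] := hF (0, 0)%N | apply: leq_ltn_trans (kS n)].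
  apply/cvgrPdist_lt => e e0.
  have [d [d0 ->]] := @pos_real R e e0.
  exists (Num.truncn d^-1) => // n /= hn.
  apply: lt_le_trans (hk n) _; rewrite lecR.
  rewrite invf_ple ?posrE ?ltr0n //.
  have di : 0 <= d^-1 by rewrite invr_ge0 ltW.
  have /andP[_ h] := truncn_itv di.
  apply: ltW; apply: lt_le_trans h _; rewrite ler_nat ltnS; exact: hn.
Qed.
Lemma scaled_return (y w : X) (mu r : R[i]) : 0 < r ->
  `|y - w| < r / 2 -> `|1 - mu| < r / (2 * (`|y| + r)) -> `|y - mu *: w| < r.
Proof.
move=> r0 h1 h2.
have e1 : y - mu *: w = (y - w) + (1 - mu) *: w.
  by rewrite scalerBl scale1r addrA subrK.
have hyr : 0 < `|y| + r by apply: lt_le_trans r0 _; rewrite -{1}(add0r r) lerD2r.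
have hw : `|w| <= `|y| + r.
  have -> : w = y - (y - w) by rewrite opprB addrC subrK.
  apply: le_trans (ler_normB _ _) _; rewrite lerD2l.
  by apply: le_trans (ltW h1) _; rewrite ler_pdivrMr ?ltr0n // ler_peMr ?ltW // ltr1n.
have h3 : `|1 - mu| * `|w| < r / 2.
  apply: le_lt_trans (ler_wpM2l (normr_ge0 _) hw) _.
  rewrite -ltr_pdivlMr //; apply: lt_le_trans h2 _.
  by rewrite le_eqVlt; apply/orP; left; apply/eqP; field; rewrite ?pnatr_eq0 ?gt_eqF.
rewrite e1; apply: le_lt_trans (ler_normD _ _) _; rewrite normrZ.
by rewrite [r in _ < r]splitr; apply: ltrD.
Qed.

Lemma iter_scale (T : X -> X) (hZ : forall (a : R[i]) x, T (a *: x) = a *: T x)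
  (l : R[i]) m x : iter m (scale_op l T) x = l ^+ m *: iter m T x.
Proof.
elim: m => [|m IH] /=; first by rewrite expr0 scale1r.
by rewrite IH /scale_op hZ scalerA exprS.
Qed.
Lemma HN_rec (T : X -> X) x (hx : Rec T x) N : forall V, open V -> V x ->
  exists k, (N < k)%N /\ (V `&` iter k T @^-1` V) x.
Proof.
move: hx => /RecP hx V oV Vx; have [e e0 he] := open_ball V x oV Vx.
have [k [Nk hk]] := hx e e0 N; exists k; split=> //; split=> //; exact: he.
Qed.

Lemma Rec_scale (T : X -> X) (hT : continuous T)
  (hZ : forall (a : R[i]) x, T (a *: x) = a *: T x) (l : R[i]) (hl : `|l| = 1) :
  Rec T `<=` Rec (scale_op l T).
Proof.
move=> x hx; apply/RecP => r r0 N.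
have hxr : 0 < `|x| + r by apply: lt_le_trans r0 _; rewrite -{1}(add0r r) lerD2r.
have hd : 0 < r / (2 * (`|x| + r)) by rewrite divr_gt0 // mulr_gt0.
have [eps [eps0 he]] := @pos_real R _ hd.
have r20 : 0 < r / 2 by rewrite divr_gt0.
have bx : ball x (r / 2) x by rewrite ballE subrr normr0.
have [m [Nm [hlm [_ Vm]]]] := @chain_circ R X T (fun W => W x) N l hl eps eps0
  (fun W W' QW sW => sW x QW) (open_iter T hT) (@HN_rec T x hx _) (ball x (r / 2))
  (ball_open _ _) bx.
exists m; split=> //; rewrite iter_scale //.
apply: (@scaled_return _ _ _ _ r0); first by rewrite -ballE.
by rewrite distrC he.
Qed.

Lemma recur_scale (T : X -> X) (hT : continuous T)
  (hZ : forall (a : R[i]) x, T (a *: x) = a *: T x) (l : R[i]) (hl : `|l| = 1) :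
  recurrent_op T -> recurrent_op (scale_op l T).
Proof.
move=> hr U oU [y Uy].
have [r r0 hU] := open_ball U y oU Uy.
have hyr : 0 < `|y| + r by apply: lt_le_trans r0 _; rewrite -{1}(add0r r) lerD2r.
have hd : 0 < r / (2 * (`|y| + r)) by rewrite divr_gt0 // mulr_gt0.
have [eps [eps0 he]] := @pos_real R _ hd.
have r20 : 0 < r / 2 by rewrite divr_gt0.
have bx : ball y (r / 2) !=set0 by exists y; rewrite ballE subrr normr0.
have Qmono : forall W W' : set X, W !=set0 -> W `<=` W' -> W' !=set0.
  by move=> W W' [z Wz] sW; exists z; exact: sW.
have [m [Nm [hlm [z [Vz Vm]]]]] := @chain_circ R X T (fun W => W !=set0) 0%N l hl eps eps0
  Qmono (open_iter T hT) hr (ball y (r / 2)) (ball_open _ _) bx.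
exists m; split=> //; exists z; split.
  apply: hU; rewrite ballE in Vz; apply: lt_trans Vz _.
  by rewrite ltr_pdivrMr ?ltr0n // ltr_pMr // ltr1n.
rewrite /preimage /= iter_scale //; apply: hU.
apply: (@scaled_return _ _ _ _ r0); first by rewrite -ballE.
by rewrite distrC he.
Qed.

Lemma Rec_pow (T : X -> X) (hT : continuous T) p (p0 : (0 < p)%N) :
  Rec T `<=` Rec (iter p T).
Proof.
move=> x hx; apply/RecP => r r0 N.
have bx : ball x r x by rewrite ballE subrr normr0.
have [m [Nm [pm [_ Vm]]]] := @chain_modp _ T (fun W => W x) (N * p)%N p p0
  (fun W W' QW sW => sW x QW) (open_iter T hT) (@HN_rec T x hx _) (ball x r)
  (ball_open _ _) bx.
exists (m %/ p)%N; split.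
  by rewrite -(ltn_pmul2r p0) divnK.
by rewrite -iterM divnK // -ballE.
Qed.

Lemma recur_pow (T : X -> X) (hT : continuous T) p (p0 : (0 < p)%N) :
  recurrent_op T -> recurrent_op (iter p T).
Proof.
move=> hr U oU U0.
have Qmono : forall W W' : set X, W !=set0 -> W `<=` W' -> W' !=set0.
  by move=> W W' [z Wz] sW; exists z; exact: sW.
have [m [m0 [pm [z [Uz Um]]]]] := @chain_modp _ T (fun W => W !=set0) 0%N p p0
  Qmono (open_iter T hT) hr U oU U0.
exists (m %/ p)%N; split.
  by rewrite divn_gt0 // dvdn_leq.
exists z; split=> //; rewrite /preimage /= -iterM divnK //.
Qed.

Lemma Rec_pow_rev (T : X -> X) p (p0 : (0 < p)%N) : Rec (iter p T) `<=` Rec T.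
Proof.
move=> x [k [k0 [kinc kcv]]]; exists (fun n => k n * p)%N; split.
  by move=> n; rewrite muln_gt0 k0.
split.
  by move=> a b ab /=; rewrite ltn_pmul2r // kinc.
have E : (fun n => iter (k n * p) T x) = (fun n => iter (k n) (iter p T) x).
  by apply/funext => n; rewrite iterM.
by rewrite E.
Qed.
End A.
Theorem proposition2p3 (R : realType) (X : completeNormedModType R[i])
    (T : {linear X -> X}) (hT : continuous T) :
  (forall l : R[i], `|l| = 1 -> Rec T = Rec (scale_op l T)) /\
  (forall p : nat, (0 < p)%N -> Rec T = Rec (iter p T)) /\
  (recurrent_op T <-> (forall p : nat, (0 < p)%N -> recurrent_op (iter p T))) /\
  (recurrent_op T <-> (forall l : R[i], `|l| = 1 -> recurrent_op (scale_op l T))).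
Proof.
have hZ : forall (a : R[i]) (x : X), T (a *: x) = a *: T x.
  by move=> a y; rewrite linearZ.
split; last split; last split.
- move=> l hl; apply/seteqP; split; first exact: (@Rec_scale R X T hT hZ l hl).
  pose S := scale_op l T.
  have hS : continuous S.
    move=> y; apply: (@continuous_comp _ _ _ T ( *:%R l) y (hT y)).
    exact: scaler_continuous.
  have hZS : forall (a : R[i]) (x : X), S (a *: x) = a *: S x.
    by move=> a y; rewrite /S /scale_op hZ !scalerA mulrC.
  have l0 : l != 0.
    by apply/eqP => l0; move: hl; rewrite l0 normr0 => /eqP; rewrite eq_sym oner_eq0.
  have hl' : `|l^-1| = 1 by rewrite normfV hl invr1.
  have E : scale_op l^-1 S = T.
    by apply/funext => y; rewrite /S /scale_op scalerA mulVf // scale1r.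
  move=> x hx; have := @Rec_scale R X S hS hZS l^-1 hl' x hx; by rewrite E.
- move=> p p0; apply/seteqP; split.
    exact: (@Rec_pow R X T hT p p0).
  exact: (@Rec_pow_rev R X T p p0).
- split.
    by move=> hr p p0; exact: (@recur_pow R X T hT p p0 hr).
  move=> h; have := h 1%N erefl.
  by have -> : iter 1 T = T by apply/funext.
- split.
    by move=> hr l hl; exact: (@recur_scale R X T hT hZ l hl hr).
  move=> h; have := h 1 (normr1 _).
  by have -> : scale_op 1 T = T by apply/funext => y; rewrite /scale_op scale1r.
Qed.
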